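(* Let $T>0$, $\gamma\in(0,T]$, $\mathcal{T}=[0,T]$, $\mathcal{D}$ the set of Lebesgue measurable $\delta:\mathcal{T}\to[-1,1]$ with $\int_{\mathcal{T}}|\delta(t)|\,\mathrm{d}t\le\gamma$, $\eta^+,\eta^-\in(0,1]$, and let $y(x^b,x^r,\delta,y_0,t)=y_0+\int_0^t\big(\eta^+[x^b+\delta(s)x^r]^+-\frac{1}{\eta^-}[x^b+\delta(s)x^r]^-\big)\mathrm{d}s$. Let $\bar y^+\ge 0$, $\bar y^-\ge 0$, $\bar y>0$, and $0\le y_0\le\bar y$. Then for every $x^b\in\mathbb{R}$ and $x^r\ge 0$: (i) $[x^b+\delta(t)x^r]^+\le\bar y^+$ for all $\delta\in\mathcal{D}$, $t\in\mathcal{T}$ if and only if $x^b+x^r\le\bar y^+$; (ii) $[x^b+\delta(t)x^r]^-\le\bar y^-$ for all $\delta\in\mathcal{D}$, $t\in\mathcal{T}$ if and only if $x^r-x^b\le\bar y^-$; (iii) $y(x^b,x^r,\delta,y_0,t)\le\bar y$ for all $\delta\in\mathcal{D}$, $t\in\mathcal{T}$ if and only if $y_0+\eta^+\big(\max\{\gamma x^b,Tx^b\}+\gamma x^r\big)\le\bar y$; (iv) $y(x^b,x^r,\delta,y_0,t)\ge 0$ for all $\delta\in\mathcal{D}$, $t\in\mathcal{T}$ if and only if $y_0-\frac{1}{\eta^-}\big(\gamma x^r-\min\{\gamma x^b,Tx^b\}\big)\ge 0$.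
   Context: $[a]^+=\max\{a,0\}$, $[a]^-=\max\{-a,0\}$. $x^b$ is the battery's base power, $x^r$ the reserve capacity, $[x^b+\delta(t)x^r]^\pm$ the charging/discharging power, $\bar y^\pm$ the charging/discharging power limits, $\bar y$ the storage capacity, $y_0$ the initial state-of-charge, and $y$ the state-of-charge. *)

(* Defs.v *)
From HB Require Import structures.
From mathcomp Require Import all_boot all_order all_algebra.
From mathcomp Require Import all_classical all_reals all_analysis.
Set Implicit Arguments. Unset Strict Implicit. Unset Printing Implicit Defensive.
Import Order.TTheory GRing.Theory Num.Theory.
Local Open Scope classical_set_scope.
Local Open Scope ring_scope.

Definition ppart {R : realType} (a : R) : R := Num.max a 0.
Definition npart {R : realType} (a : R) : R := Num.max (- a) 0.

Definition admissible {R : realType} (T gamma : R) (delta : R -> R) : Prop :=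
  [/\ measurable_fun `[0, T] delta,
      (forall t, 0 <= t <= T -> -1 <= delta t <= 1) &
      (\int[@lebesgue_measure R]_(t in `[0%R, T]) (`|delta t|)%:E <= gamma%:E)%E].

(* State of charge y(x^b, x^r, delta, y0, t), as an extended real
   (it is finite since the integrand is bounded and measurable). *)
Definition soc {R : realType} (etap etam xb xr : R) (delta : R -> R) (y0 t : R)
  : \bar R :=
  (y0%:E + \int[@lebesgue_measure R]_(s in `[0%R, t])
      (etap * ppart (xb + delta s * xr) - etam^-1 * npart (xb + delta s * xr))%:E)%E.

(* Main.v *)
Require Import Defs.
From HB Require Import structures.
From mathcomp Require Import all_boot all_order all_algebra.
From mathcomp Require Import all_classical all_reals all_analysis.
From mathcomp Require Import ring lra.
Import Order.TTheory GRing.Theory Num.Theory.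
Local Open Scope classical_set_scope.
Local Open Scope ring_scope.

Lemma mu_itv (R : realType) (t : R) : 0 <= t ->
  @lebesgue_measure R `[0, t] = t%:E.
Proof.
move=> t0; rewrite lebesgue_measure_itv /= lte_fin.
case: ifPn => [_|]; first by rewrite oppr0 adde0.
by rewrite -leNgt => tle; have -> : t = 0 by apply/eqP; rewrite eq_le tle t0.
Qed.

Lemma meas_integrand (R : realType) (D : set R) (etap etam xb xr : R) (delta : R -> R) :
  measurable D -> measurable_fun D delta ->
  measurable_fun D (fun s => etap * ppart (xb + delta s * xr) - etam^-1 * npart (xb + delta s * xr)).
Proof.
move=> mD md.
have ma : measurable_fun D (fun s => xb + delta s * xr).
  apply: measurable_realfun.measurable_funD => //; apply: measurable_realfun.measurable_funM => //.
apply: measurable_realfun.measurable_funB; apply: measurable_realfun.measurable_funM => //.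
  by apply: measurable_realfun.measurable_maxr.
by apply: measurable_realfun.measurable_maxr => //; apply: measurable_realfun.measurable_funN.
Qed.

Lemma bnd_int (R : realType) (t B : R) (f : R -> R) : 0 <= t ->
  measurable_fun `[0, t] f -> (forall s, 0 <= s <= t -> `|f s| <= B) ->
  (@lebesgue_measure R).-integrable `[0, t] (EFin \o f).
Proof.
move=> t0 mf fB; apply: measurable_bounded_integrable => //.
  apply: (@le_lt_trans _ _ t%:E); last exact: ltry.
  by rewrite le_eqVlt; apply/orP; left; apply/eqP; exact: mu_itv.
rewrite /bounded_near; near=> M => x /= xi.
have xi' : 0 <= x <= t by move: xi; rewrite in_itv.
apply: (le_trans (fB x xi')).
near: M; exact: (nbhs_pinfty_ge (num_real B)).
Unshelve. all: by end_near.
Qed.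

Lemma int_lin (R : realType) (t c k : R) (delta : R -> R) : 0 <= t ->
  measurable_fun `[0, t] delta -> (forall s, 0 <= s <= t -> `|delta s| <= 1) ->
  (\int[@lebesgue_measure R]_(s in `[0%R, t]) (c + k * `|delta s|)%:E =
   (c * t)%:E + k%:E * \int[@lebesgue_measure R]_(s in `[0%R, t]) (`|delta s|)%:E)%E.
Proof.
move=> t0 md db.
have mabs : measurable_fun `[0, t] (fun s => `|delta s|).
  exact: measurableT_comp.
have i1 : (@lebesgue_measure R).-integrable `[0, t] (EFin \o (fun _ : R => c)).
  apply: (@bnd_int _ _ `|c|) => //; exact: measurable_cst.
have i2 : (@lebesgue_measure R).-integrable `[0, t] (EFin \o (fun s => k * `|delta s|)).
  apply: (@bnd_int _ _ (`|k| * 1)) => //.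
    by apply: measurable_realfun.measurable_funM => //; exact: measurable_cst.
  move=> s si; rewrite normrM normr_id ler_wpM2l //; exact: db.
have i3 : (@lebesgue_measure R).-integrable `[0, t] (EFin \o (fun s => `|delta s|)).
  by apply: (@bnd_int _ _ 1) => // s si; rewrite normr_id; exact: db.
rewrite (_ : (fun s => (c + k * `|delta s|)%:E) =
   ((EFin \o (fun _ : R => c)) \+ (EFin \o (fun s => (k * `|delta s|)%R)))%E); last first.
  by apply/funext => s /=; rewrite EFinD.
rewrite integralD_EFin //=; congr (_ + _)%E.
  rewrite (_ : (fun _ => c%:E) = cst c%:E) // integral_cst //.
  by rewrite EFinM; congr (_ * _)%E; exact: mu_itv.
under eq_integral do rewrite EFinM.
by rewrite integralZl.
Qed.

Lemma int_up (R : realType) (t c k g B : R) (delta h : R -> R) : 0 <= t ->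
  measurable_fun `[0, t] delta -> (forall s, 0 <= s <= t -> `|delta s| <= 1) ->
  (\int[@lebesgue_measure R]_(s in `[0%R, t]) (`|delta s|)%:E <= g%:E)%E ->
  0 <= k -> measurable_fun `[0, t] h -> (forall s, 0 <= s <= t -> `|h s| <= B) ->
  (forall s, 0 <= s <= t -> h s <= c + k * `|delta s|) ->
  (\int[@lebesgue_measure R]_(s in `[0%R, t]) (h s)%:E <= (c * t + k * g)%:E)%E.
Proof.
move=> t0 md db ig k0 mh hB hle.
have mabs : measurable_fun `[0, t] (fun s => `|delta s|).
  exact: measurableT_comp.
have i2 : (@lebesgue_measure R).-integrable `[0, t] (EFin \o (fun s => c + k * `|delta s|)).
  apply: (@bnd_int _ _ (`|c| + `|k| * 1)) => //.
    apply: measurable_realfun.measurable_funD; first exact: measurable_cst.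
    by apply: measurable_realfun.measurable_funM => //; exact: measurable_cst.
  move=> s si; rewrite (le_trans (ler_normD _ _)) // lerD2l.
  rewrite normrM normr_id ler_wpM2l //; exact: db.
apply: (@le_trans _ _ (\int[@lebesgue_measure R]_(s in `[0%R, t]) (c + k * `|delta s|)%:E)%E).
  apply: le_integral => //.
  - exact: (@bnd_int _ _ B).
  - by move=> s /[!inE] si; rewrite lee_fin hle //; move: si; rewrite in_itv.
rewrite int_lin // EFinD EFinM leeD2l //.
by rewrite EFinM lee_wpmul2l // lee_fin.
Qed.

Lemma int_lo (R : realType) (t c k g B : R) (delta h : R -> R) : 0 <= t ->
  measurable_fun `[0, t] delta -> (forall s, 0 <= s <= t -> `|delta s| <= 1) ->
  (\int[@lebesgue_measure R]_(s in `[0%R, t]) (`|delta s|)%:E <= g%:E)%E ->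
  0 <= k -> measurable_fun `[0, t] h -> (forall s, 0 <= s <= t -> `|h s| <= B) ->
  (forall s, 0 <= s <= t -> - (c + k * `|delta s|) <= h s) ->
  (- (c * t + k * g)%:E <= \int[@lebesgue_measure R]_(s in `[0%R, t]) (h s)%:E)%E.
Proof.
move=> t0 md db ig k0 mh hB hle.
have mabs : measurable_fun `[0, t] (fun s => `|delta s|).
  exact: measurableT_comp.
have i2 : (@lebesgue_measure R).-integrable `[0, t] (EFin \o (fun s => - c + - k * `|delta s|)).
  apply: (@bnd_int _ _ (`|c| + `|k| * 1)) => //.
    apply: measurable_realfun.measurable_funD; first exact: measurable_cst.
    by apply: measurable_realfun.measurable_funM => //; exact: measurable_cst.
  move=> s si; rewrite (le_trans (ler_normD _ _)) // normrN lerD2l.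
  rewrite normrM normrN normr_id ler_wpM2l //; exact: db.
apply: (@le_trans _ _ (\int[@lebesgue_measure R]_(s in `[0%R, t]) (- c + - k * `|delta s|)%:E)%E); last first.
  apply: le_integral => //.
  - exact: (@bnd_int _ _ B).
  - move=> s /[!inE] si; have si' : 0 <= s <= t by move: si => /=; rewrite in_itv.
    by rewrite lee_fin (le_trans _ (hle s si')) // opprD mulNr.
rewrite int_lin // EFinD oppeD //; apply: leeD; first by rewrite -EFinN mulNr.
by rewrite EFinN mulNe EFinM leeN2 lee_wpmul2l // lee_fin.
Qed.
Lemma pp_ge {R : realType} (a : R) : a <= ppart a.
Proof. by rewrite /ppart le_max lexx. Qed.
Lemma pp_ge0 {R : realType} (a : R) : 0 <= ppart a.
Proof. by rewrite /ppart le_max lexx orbT. Qed.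
Lemma pp_le {R : realType} (a x : R) : a <= x -> 0 <= x -> ppart a <= x.
Proof. by move=> h1 h2; rewrite /ppart ge_max h1 h2. Qed.
Lemma pp_id {R : realType} (a : R) : 0 <= a -> ppart a = a.
Proof. by move=> h; rewrite /ppart max_l. Qed.
Lemma pp_0 {R : realType} (a : R) : a <= 0 -> ppart a = 0.
Proof. by move=> h; rewrite /ppart max_r. Qed.
Lemma np_ge {R : realType} (a : R) : - a <= npart a.
Proof. by rewrite /npart le_max lexx. Qed.
Lemma np_ge0 {R : realType} (a : R) : 0 <= npart a.
Proof. by rewrite /npart le_max lexx orbT. Qed.
Lemma np_le {R : realType} (a x : R) : - a <= x -> 0 <= x -> npart a <= x.
Proof. by move=> h1 h2; rewrite /npart ge_max h1 h2. Qed.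
Lemma np_id {R : realType} (a : R) : a <= 0 -> npart a = - a.
Proof. by move=> h; rewrite /npart max_l // oppr_ge0. Qed.
Lemma np_0 {R : realType} (a : R) : 0 <= a -> npart a = 0.
Proof. by move=> h; rewrite /npart max_r // oppr_le0. Qed.


Definition Fi {R : realType} (etap etam xb xr d : R) :=
  etap * ppart (xb + d * xr) - etam^-1 * npart (xb + d * xr).

Lemma Fi_up {R : realType} {etap etam xb xr d : R} : 0 < etap -> 0 < etam ->
  0 <= xr -> -1 <= d <= 1 ->
  Fi etap etam xb xr d <= etap * ppart (xb + d * xr).
Proof.
move=> ep em xr0 _; rewrite /Fi.
have := np_ge0 (xb + d * xr); have : 0 < etam^-1 by rewrite invr_gt0.
move=> *; nra.
Qed.

Lemma Fi_lo {R : realType} {etap etam xb xr d : R} : 0 < etap -> 0 < etam ->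
  0 <= xr -> -1 <= d <= 1 ->
  - (etam^-1 * npart (xb + d * xr)) <= Fi etap etam xb xr d.
Proof.
move=> ep em xr0 _; rewrite /Fi.
have := pp_ge0 (xb + d * xr).
move=> *; nra.
Qed.

Lemma absd {R : realType} {d : R} : -1 <= d <= 1 ->
  [/\ d <= `|d|, - d <= `|d|, 0 <= `|d| & `|d| <= 1].
Proof.
move=> /andP[h1 h2]; case: (lerP 0 d) => hd.
  by rewrite ger0_norm //; split => //; lra.
by rewrite ltr0_norm //; split => //; lra.
Qed.

Lemma P2 (R : realType) (etap etam xb xr d : R) : 0 < etap -> 0 < etam ->
  0 <= xr -> -1 <= d <= 1 -> 0 <= xb ->
  Fi etap etam xb xr d <= etap * xb + etap * xr * `|d|.
Proof.
move=> ep em xr0 dd xb0; apply: (le_trans (Fi_up ep em xr0 dd)).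
have [h1 h2 h3 h4] := absd dd.
have : ppart (xb + d * xr) <= xb + xr * `|d|.
  apply: pp_le; nra.
move=> *; nra.
Qed.

Lemma P3 (R : realType) (etap etam xb xr d : R) : 0 < etap -> 0 < etam ->
  0 <= xr -> -1 <= d <= 1 -> xb < 0 ->
  Fi etap etam xb xr d <= 0 + etap * ppart (xb + xr) * `|d|.
Proof.
move=> ep em xr0 dd xb0; apply: (le_trans (Fi_up ep em xr0 dd)).
have [h1 h2 h3 h4] := absd dd.
have := pp_ge (xb + xr); have := pp_ge0 (xb + xr) => *.
have : ppart (xb + d * xr) <= ppart (xb + xr) * `|d|.
  apply: pp_le; nra.
move=> *; nra.
Qed.

Lemma P5 (R : realType) (etap etam xb xr d : R) : 0 < etap -> 0 < etam ->
  0 <= xr -> -1 <= d <= 1 -> xb <= 0 ->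
  - (etam^-1 * - xb + etam^-1 * xr * `|d|) <= Fi etap etam xb xr d.
Proof.
move=> ep em xr0 dd xb0; apply: le_trans (Fi_lo ep em xr0 dd).
have [h1 h2 h3 h4] := absd dd.
have : 0 < etam^-1 by rewrite invr_gt0.
have : npart (xb + d * xr) <= - xb + xr * `|d|.
  apply: np_le; nra.
move=> *; nra.
Qed.

Lemma P6 (R : realType) (etap etam xb xr d : R) : 0 < etap -> 0 < etam ->
  0 <= xr -> -1 <= d <= 1 -> 0 < xb ->
  - (0 + etam^-1 * ppart (xr - xb) * `|d|) <= Fi etap etam xb xr d.
Proof.
move=> ep em xr0 dd xb0; apply: le_trans (Fi_lo ep em xr0 dd).
have [h1 h2 h3 h4] := absd dd.
have : 0 < etam^-1 by rewrite invr_gt0.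
have := pp_ge (xr - xb); have := pp_ge0 (xr - xb) => *.
have : npart (xb + d * xr) <= ppart (xr - xb) * `|d|.
  apply: np_le; nra.
move=> *; nra.
Qed.

Lemma Fi_abs (R : realType) (etap etam xb xr d : R) : 0 < etap -> 0 < etam ->
  0 <= xr -> -1 <= d <= 1 ->
  `|Fi etap etam xb xr d| <= (etap + etam^-1) * (`|xb| + xr).
Proof.
move=> ep em xr0 dd.
have [h1 h2 h3 h4] := absd dd.
have ei : 0 < etam^-1 by rewrite invr_gt0.
have n1 := ler_norm xb.
have n2 : - xb <= `|xb| by rewrite -normrN ler_norm.
have n3 := normr_ge0 xb.
have q1 : ppart (xb + d * xr) <= `|xb| + xr by apply: pp_le; nra.
have q2 : npart (xb + d * xr) <= `|xb| + xr by apply: np_le; nra.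
have q3 := pp_ge0 (xb + d * xr); have q4 := np_ge0 (xb + d * xr).
rewrite /Fi ler_norml; apply/andP; split; nra.
Qed.

Lemma adm_facts (R : realType) (T g t : R) (delta : R -> R) :
  admissible T g delta -> 0 <= t <= T ->
  [/\ measurable_fun `[0, t] delta, (forall s, 0 <= s <= t -> -1 <= delta s <= 1),
      (forall s, 0 <= s <= t -> `|delta s| <= 1) &
      (\int[@lebesgue_measure R]_(s in `[0%R, t]) (`|delta s|)%:E <= g%:E)%E].
Proof.
case=> md db ig /andP[t0 tT].
have sub : `[0, t] `<=` `[0, T].
  move=> s /=; rewrite !in_itv /= => /andP[s0 st].
  by rewrite s0 (le_trans st tT).
have dbt : forall s, 0 <= s <= t -> -1 <= delta s <= 1.
  move=> s /andP[s0 st]; apply: db; rewrite s0 /=; exact: le_trans st tT.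
split => //.
- exact: measurable_funS md.
- by move=> s /dbt; rewrite ler_norml.
apply: le_trans ig; apply: ge0_subset_integral => //.
have mab : measurable_fun `[0, T] (fun x => `|delta x|) by exact: measurableT_comp.
exact: (proj2 (measurable_realfun.measurable_EFinP _ _) mab).
Qed.

Lemma soc_up (R : realType) (T g etap etam xb xr y0 t c k : R) (delta : R -> R) :
  0 < etap -> 0 < etam -> 0 <= xr -> admissible T g delta -> 0 <= t <= T -> 0 <= k ->
  (forall d, -1 <= d <= 1 -> Fi etap etam xb xr d <= c + k * `|d|) ->
  (soc etap etam xb xr delta y0 t <= (y0 + (c * t + k * g))%:E)%E.
Proof.
move=> ep em xr0 ad tt k0 hF.
have [md db dab ig] := adm_facts _ _ _ _ _ ad tt.
have t0 : 0 <= t by case/andP: tt.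
rewrite /soc EFinD leeD2l //.
apply: (@int_up R t c k g ((etap + etam^-1) * (`|xb| + xr)) delta
          (fun s => Fi etap etam xb xr (delta s))) => //.
- exact: meas_integrand.
- by move=> s /db ds; exact: Fi_abs.
- by move=> s /db ds; exact: hF.
Qed.

Lemma soc_lo (R : realType) (T g etap etam xb xr y0 t c k : R) (delta : R -> R) :
  0 < etap -> 0 < etam -> 0 <= xr -> admissible T g delta -> 0 <= t <= T -> 0 <= k ->
  (forall d, -1 <= d <= 1 -> - (c + k * `|d|) <= Fi etap etam xb xr d) ->
  ((y0 - (c * t + k * g))%:E <= soc etap etam xb xr delta y0 t)%E.
Proof.
move=> ep em xr0 ad tt k0 hF.
have [md db dab ig] := adm_facts _ _ _ _ _ ad tt.
have t0 : 0 <= t by case/andP: tt.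
rewrite /soc EFinD leeD2l // EFinN.
apply: (@int_lo R t c k g ((etap + etam^-1) * (`|xb| + xr)) delta
          (fun s => Fi etap etam xb xr (delta s))) => //.
- exact: meas_integrand.
- by move=> s /db ds; exact: Fi_abs.
- by move=> s /db ds; exact: hF.
Qed.

Lemma soc_const (R : realType) (etap etam xb xr y0 t d : R) (delta : R -> R) :
  0 <= t -> (forall s, 0 <= s <= t -> delta s = d) ->
  soc etap etam xb xr delta y0 t = (y0 + Fi etap etam xb xr d * t)%:E.
Proof.
move=> t0 hd; rewrite /soc EFinD; congr (_ + _)%E.
have -> : (\int[@lebesgue_measure R]_(s in `[0%R, t]) (Fi etap etam xb xr (delta s))%:E =
   \int[@lebesgue_measure R]_(s in `[0%R, t]) (cst (Fi etap etam xb xr d)%:E) s)%E.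
  apply: eq_integral => s /[!inE] si; have si' : 0 <= s <= t by move: si => /=; rewrite in_itv.
  by rewrite /= hd.
by rewrite integral_cst // EFinM; congr (_ * _)%E; exact: mu_itv.
Qed.

Lemma adm_cst (R : realType) (T g c : R) : 0 < T -> -1 <= c <= 1 -> `|c| * T <= g ->
  admissible T g (fun _ => c).
Proof.
move=> T0 cb cT; split => //.
rewrite (_ : (fun s => (`|c|)%:E) = cst (`|c|)%:E) // integral_cst //.
rewrite (_ : (_ * _)%E = (`|c| * T)%:E) ?lee_fin //.
by rewrite EFinM; congr (_ * _)%E; apply: mu_itv; exact: ltW.
Qed.

Lemma adm_ind (R : realType) (T g sg : R) : 0 < g -> g <= T -> `|sg| = 1 ->
  admissible T g (fun s => sg * \1_(`[0, g]) s).
Proof.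
move=> g0 gT sg1; split.
- apply: measurable_realfun.measurable_funM; first exact: measurable_cst.
  by apply: measurable_realfun.measurable_indic; exact: measurable_itv.
- move=> t _; rewrite indicE; case: (t \in _).
    by rewrite mulr1 -ler_norml sg1.
  by rewrite mulr0; lra.
have -> : (fun s => (`|sg * \1_(`[0, g]) s|)%:E) = (fun s => (\1_(`[0, g]) s : R)%:E).
  apply/funext => s; rewrite normrM sg1 mul1r ger0_norm //.

rewrite (integral_indic (@lebesgue_measure R) (measurable_itv `[0, T]) (measurable_itv `[0, g])).
rewrite setIidl; last first.
  move=> s /=; rewrite !in_itv /= => /andP[-> sgg]; exact: le_trans sgg gT.
by rewrite le_eqVlt; apply/orP; left; apply/eqP; apply: mu_itv; exact: ltW.
Qed.

Theorem proposition1 (R : realType) (T gamma etap etam ybp ybm yb y0 : R) :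
  0 < T -> 0 < gamma -> gamma <= T ->
  0 < etap -> etap <= 1 -> 0 < etam -> etam <= 1 ->
  0 <= ybp -> 0 <= ybm -> 0 < yb -> 0 <= y0 -> y0 <= yb ->
  forall xb xr : R, 0 <= xr ->
  [/\ (forall delta, admissible T gamma delta -> forall t, 0 <= t <= T ->
          ppart (xb + delta t * xr) <= ybp) <-> xb + xr <= ybp,
      (forall delta, admissible T gamma delta -> forall t, 0 <= t <= T ->
          npart (xb + delta t * xr) <= ybm) <-> xr - xb <= ybm,
      (forall delta, admissible T gamma delta -> forall t, 0 <= t <= T ->
          (soc etap etam xb xr delta y0 t <= yb%:E)%E) <->
        y0 + etap * (Num.max (gamma * xb) (T * xb) + gamma * xr) <= yb &
      (forall delta, admissible T gamma delta -> forall t, 0 <= t <= T ->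
          (0%:E <= soc etap etam xb xr delta y0 t)%E) <->
        0 <= y0 - etam^-1 * (gamma * xr - Num.min (gamma * xb) (T * xb))].
Proof.
move=> T0 g0 gT ep ep1 em em1 ybp0 ybm0 yb0 y00 y0yb xb xr xr0.
have ei : 0 < etam^-1 by rewrite invr_gt0.
have i0 : (\1_(`[0, gamma]) 0 : R) = 1.
  by rewrite indicE mem_set //= in_itv /= lexx ltW.
have T0' : (0:R) <= 0 <= T by rewrite lexx ltW.
have gg : 0 <= gamma <= T by rewrite ltW.
have TT : 0 <= T <= T by apply/andP; split => //; exact: ltW.
have adm1 := @adm_ind R T gamma 1 g0 gT (normr1 _).
have admN1 := @adm_ind R T gamma (-1) g0 gT (etrans (normrN _) (normr1 _)).
have indg : forall sg s, 0 <= s <= gamma -> sg * (\1_(`[0, gamma]) s : R) = sg.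
  by move=> sg s ss; rewrite indicE mem_set ?mulr1 //= in_itv /= ss.
split.
- split.
  + move=> H; have := H _ adm1 0 T0'; rewrite i0 !mul1r => h.
    exact: le_trans (pp_ge _) h.
  + move=> h d ad t tt; case: ad => _ db _; have [d1 d2] := andP (db t tt).
    apply: pp_le => //; nra.
- split.
  + move=> H; have := H _ admN1 0 T0'; rewrite i0 mulr1 => h.
    have := np_ge (xb + -1 * xr); lra.
  + move=> h d ad t tt; case: ad => _ db _; have [d1 d2] := andP (db t tt).
    apply: np_le => //; nra.
- split.
  + move=> H; case: (lerP 0 xb) => xb0.
    * set d := gamma / T.
      have dT : d * T = gamma by rewrite /d mulfVK // gt_eqF.
      have d0 : 0 <= d by rewrite /d divr_ge0 // ltW.
      have d1 : d <= 1 by rewrite /d ler_pdivrMr // mul1r.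
      have ad : admissible T gamma (fun _ => d).
        by apply: adm_cst => //; [rewrite d1 andbT; lra | rewrite ger0_norm // dT].
      have := H _ ad T TT; rewrite (@soc_const _ _ _ _ _ _ _ d) ?(ltW T0) // lee_fin.
      have a0 : 0 <= xb + d * xr by nra.
      rewrite /Fi pp_id // np_0 // mulr0 subr0 max_r; last by rewrite ler_wpM2r.
      have -> : etap * (xb + d * xr) * T = etap * (T * xb + gamma * xr) by rewrite -dT; ring.
      lra.
    * rewrite max_l; last by rewrite ler_wnM2r // ltW.
      case: (lerP 0 (xb + xr)) => s0.
        have := H _ adm1 gamma gg; rewrite (@soc_const _ _ _ _ _ _ _ 1 _ (ltW g0) (indg 1)).
        rewrite lee_fin /Fi mul1r pp_id // np_0 // mulr0 subr0 => h; nra.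
      have := mulr_gt0 ep g0; nra.
  + move=> h d ad t tt; have t0 : 0 <= t by case/andP: tt.
    have tT : t <= T by case/andP: tt.
    case: (lerP 0 xb) => xb0.
    * apply: le_trans (@soc_up R T gamma etap etam xb xr y0 t (etap * xb) (etap * xr) d
          ep em xr0 ad tt _ _) _.
      - exact: mulr_ge0 (ltW ep) xr0.
      - by move=> e ee; exact: P2.
      rewrite lee_fin; move: h; rewrite max_r; last by rewrite ler_wpM2r.
      have := ler_wpM2l (mulr_ge0 (ltW ep) xb0) tT; nra.
    * apply: le_trans (@soc_up R T gamma etap etam xb xr y0 t 0 (etap * ppart (xb + xr)) d
          ep em xr0 ad tt _ _) _.
      - exact: mulr_ge0 (ltW ep) (pp_ge0 _).
      - by move=> e ee; exact: P3.
      rewrite lee_fin; move: h; rewrite max_l; last by rewrite ler_wnM2r // ltW.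
      case: (lerP 0 (xb + xr)) => s0.
        rewrite pp_id //; nra.
      rewrite pp_0; last exact: ltW.
      by rewrite mul0r mulr0 mul0r addr0 addr0 => _.
- split.
  + move=> H; case: (lerP xb 0) => xb0.
    * set d := - (gamma / T).
      have dT : d * T = - gamma by rewrite /d mulNr mulfVK // gt_eqF.
      have d0 : 0 <= gamma / T by rewrite divr_ge0 // ltW.
      have d1 : gamma / T <= 1 by rewrite ler_pdivrMr // mul1r.
      have ad : admissible T gamma (fun _ => d).
        apply: adm_cst => //; first by rewrite /d; apply/andP; split; lra.
        by rewrite /d normrN ger0_norm // mulfVK // gt_eqF.
      have := H _ ad T TT; rewrite (@soc_const _ _ _ _ _ _ _ d) ?(ltW T0) // lee_fin.
      have a0 : xb + d * xr <= 0 by rewrite /d; nra.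
      rewrite /Fi pp_0 // np_id // mulr0 sub0r min_r; last by nra.
      have -> : - (etam^-1 * - (xb + d * xr)) * T = - (etam^-1 * (gamma * xr - T * xb)).
        have gE : gamma = - (d * T) by rewrite dT opprK.
        by rewrite gE; ring.
      lra.
    * rewrite min_l; last by rewrite ler_wpM2r // ltW.
      case: (lerP 0 (xr - xb)) => s0.
        have := H _ admN1 gamma gg; rewrite (@soc_const _ _ _ _ _ _ _ (-1) _ (ltW g0) (indg (-1))).
        have a0 : xb + -1 * xr <= 0 by lra.
        rewrite lee_fin /Fi pp_0 // np_id // mulr0 sub0r => h; nra.
      have := mulr_gt0 ei g0; nra.
  + move=> h d ad t tt; have t0 : 0 <= t by case/andP: tt.
    have tT : t <= T by case/andP: tt.
    case: (lerP xb 0) => xb0.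
    * have k0 : 0 <= etam^-1 * xr by exact: mulr_ge0 (ltW ei) xr0.
      have L := @soc_lo R T gamma etap etam xb xr y0 t (etam^-1 * - xb) (etam^-1 * xr) d
          ep em xr0 ad tt k0 (fun e ee => @P5 R etap etam xb xr e ep em xr0 ee xb0).
      apply: le_trans L; rewrite lee_fin; move: h; rewrite min_r; last by nra.
      have nxb : 0 <= - xb by rewrite oppr_ge0.
      have := ler_wpM2l (mulr_ge0 (ltW ei) nxb) tT; nra.
    * have k0 : 0 <= etam^-1 * ppart (xr - xb) by exact: mulr_ge0 (ltW ei) (pp_ge0 _).
      have L := @soc_lo R T gamma etap etam xb xr y0 t 0 (etam^-1 * ppart (xr - xb)) d
          ep em xr0 ad tt k0 (fun e ee => @P6 R etap etam xb xr e ep em xr0 ee xb0).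
      apply: le_trans L; rewrite lee_fin; move: h; rewrite min_l; last by nra.
      case: (lerP 0 (xr - xb)) => s0.
        rewrite pp_id //; nra.
      rewrite pp_0; last exact: ltW.
      by rewrite mul0r mulr0 mul0r addr0 subr0 => _.
Qed.
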